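(* Let $\mathfrak{sp}(2,\mathbb{R})$, the basis $(e_I)_{I=1}^{10}$, the dual left-invariant coframe $(e^I)$ on $\mathbf{Sp}(2,\mathbb{R})$ and the distribution $D_l$ be as in the context. Consider symmetric bilinear forms $g=\sum_{\mu,\nu=1}^{7} g_{\mu\nu}\, e^\mu\odot e^\nu$ on $\mathbf{Sp}(2,\mathbb{R})$ with real constant coefficients $g_{\mu\nu}=g_{\nu\mu}$. Then $\mathcal{L}_X g=0$ for all vector fields $X$ in $D_l$ if and only if $$g=g_{22}(e^2)^2+2g_{24}e^2\odot e^4+g_{44}(e^4)^2+2g_{35}(e^3\odot e^5-e^1\odot e^7)+2g_{26}e^2\odot e^6+2g_{46}e^4 \odot e^6+g_{66}(e^6)^2$$ for some real constants $g_{22},g_{24},g_{44},g_{35},g_{26},g_{46},g_{66}$.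
   Context: Realize $\mathfrak{sp}(2,\mathbb{R})$ as the real $4\times 4$ matrices $$E=\begin{pmatrix} a_5&a_7&a_9&2a_{10}\\ -a_4&a_6&a_8&a_9\\ a_2&a_3&-a_6&-a_7\\ -2a_1&a_2&a_4&-a_5\end{pmatrix},\qquad a_I\in\mathbb{R},$$ with bracket the matrix commutator and basis $E_I=\partial E/\partial a_I$, $I=1,\dots,10$. Put $e_1=E_2,\ e_2=E_3,\ e_3=E_4,\ e_4=E_6,\ e_5=E_7,\ e_6=E_8,\ e_7=E_9,\ e_8=E_1,\ e_9=E_5,\ e_{10}=E_{10}$, regarded as left-invariant vector fields on $\mathbf{Sp}(2,\mathbb{R})$, and let $(e^I)$ be the dual left-invariant 1-forms ($e_I\lrcorner e^J=\delta^J_I$). They satisfy ${\rm d} e^1=-e^1\wedge(e^4+e^9)+e^2\wedge e^3-2e^5\wedge e^8$, ${\rm d} e^2=-2e^1\wedge e^5-2e^2\wedge e^4$, ${\rm d} e^3=-e^1\wedge e^6+e^3\wedge(e^4-e^9)-2e^7\wedge e^8$, ${\rm d} e^4=e^1\wedge e^7+e^2\wedge e^6+e^3\wedge e^5$, ${\rm d} e^5=2e^1\wedge e^{10}+e^2\wedge e^7+e^5\wedge (e^9-e^4)$, ${\rm d} e^6=2e^3\wedge e^7-2e^4\wedge e^6$, ${\rm d} e^7=2e^3\wedge e^{10}-e^5\wedge e^6+e^7\wedge (e^4+e^9)$, ${\rm d} e^8=-e^1\wedge e^3-2e^8\wedge e^9$, ${\rm d} e^9=e^1\wedge e^7-e^3\wedge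 e^5-4e^8\wedge e^{10}$, ${\rm d} e^{10}=-e^5\wedge e^7-2e^9\wedge e^{10}$. $D_l$ is the (integrable) rank-3 distribution on $\mathbf{Sp}(2,\mathbb{R})$ spanned by $e_8,e_9,e_{10}$, i.e. the annihilator of $e^1,\dots,e^7$; its leaves are the cosets of the subgroup $\mathbf{SL}(2,\mathbb{R})_l$ with Lie algebra $\mathrm{Span}(E_1,E_5,E_{10})$. Notation: $e^I\odot e^J=\tfrac12(e^I\otimes e^J+e^J\otimes e^I)$, $(e^I)^2=e^I\odot e^I$. *)

(* Defs.v *)
From mathcomp Require Import all_boot all_order all_algebra.
From mathcomp Require Import reals.
Set Implicit Arguments. Unset Strict Implicit. Unset Printing Implicit Defensive.
Import Order.TTheory GRing.Theory Num.Theory.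
Local Open Scope ring_scope.

Section Sp2.
Variable R : realType.

(* The generic element E(a) of sp(2,R); a I is the coordinate a_I, I = 1..10. *)
Definition Emat (a : nat -> R) : 'M[R]_4 :=
  \matrix_(i < 4, j < 4)
    match nat_of_ord i, nat_of_ord j with
    | 0, 0 => a 5%N   | 0, 1 => a 7%N  | 0, 2 => a 9%N  | 0, 3 => 2 * a 10%N
    | 1, 0 => - a 4%N | 1, 1 => a 6%N  | 1, 2 => a 8%N  | 1, 3 => a 9%N
    | 2, 0 => a 2%N   | 2, 1 => a 3%N  | 2, 2 => - a 6%N | 2, 3 => - a 7%N
    | 3, 0 => -2 * a 1%N | 3, 1 => a 2%N | 3, 2 => a 4%N | _, _ => - a 5%N
    end.

Definition in_sp2 (M : 'M[R]_4) : Prop := exists a : nat -> R, M = Emat a.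

Definition Ebas (I : nat) : 'M[R]_4 := Emat (fun J => if J == I then 1 else 0).

(* relabelling e_i = E_{perm i} *)
Definition perm10 (i : nat) : nat :=
  match i with
  | 1 => 2 | 2 => 3 | 3 => 4 | 4 => 6 | 5 => 7
  | 6 => 8 | 7 => 9 | 8 => 1 | 9 => 5 | 10 => 10 | _ => 0
  end%N.

Definition ebas (i : nat) : 'M[R]_4 := Ebas (perm10 i).

Definition acoord (I : nat) (M : 'M[R]_4) : R :=
  match I with
  | 1 => - M (3%:R) (0%:R) / 2
  | 2 => M 2%:R 0%:R
  | 3 => M 2%:R 1%:R
  | 4 => - M 1%:R 0%:R
  | 5 => M 0%:R 0%:R
  | 6 => M 1%:R 1%:R
  | 7 => M 0%:R 1%:R
  | 8 => M 1%:R 2%:R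
  | 9 => M 0%:R 2%:R
  | 10 => M 0%:R 3%:R / 2
  | _ => 0%R
  end.

(* dual coframe e^i (at the identity, i.e. on left-invariant vector fields) *)
Definition ecov (i : nat) (M : 'M[R]_4) : R := acoord (perm10 i) M.

Definition odot (i j : nat) (Y Z : 'M[R]_4) : R :=
  (ecov i Y * ecov j Z + ecov j Y * ecov i Z) / 2.

Definition gform (G : nat -> nat -> R) (Y Z : 'M[R]_4) : R :=
  \sum_(1 <= mu < 8) \sum_(1 <= nu < 8) G mu nu * odot mu nu Y Z.

(* Lie bracket of left-invariant vector fields = matrix commutator *)
Definition lbr (X Y : 'M[R]_4) : 'M[R]_4 := X *m Y - Y *m X.

(* Lie derivative of a left-invariant symmetric 2-tensor h along the
   left-invariant field X, evaluated on left-invariant fields Y, Z: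
   (L_X h)(Y,Z) = X(h(Y,Z)) - h([X,Y],Z) - h(Y,[X,Z]), and h(Y,Z) is constant. *)
Definition lieD (X : 'M[R]_4) (h : 'M[R]_4 -> 'M[R]_4 -> R) (Y Z : 'M[R]_4) : R :=
  - h (lbr X Y) Z - h Y (lbr X Z).

Definition in_Dl (X : 'M[R]_4) : Prop :=
  exists c8 c9 c10 : R, X = c8 *: ebas 8 + c9 *: ebas 9 + c10 *: ebas 10.

End Sp2.

(* Main.v *)
Require Import Defs.
From mathcomp Require Import all_boot all_order all_algebra.
From mathcomp Require Import reals ring lra.
Import Order.TTheory GRing.Theory Num.Theory.
Local Open Scope ring_scope.

Lemma acoord_E (R : realType) (a : nat -> R) I : (1 <= I <= 10)%N -> acoord I (Emat a) = a I.
Proof.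
case: I => [//|[|[|[|[|[|[|[|[|[|[|//]]]]]]]]]]] _; rewrite /acoord /Emat !mxE /=; try field.
all: done. Qed.
Definition brk {R : realType} (x y : nat -> R) (I : nat) : R :=
  match I with
  | 1 => (2) * (x 1%N * y 5%N - x 5%N * y 1%N) + (1) * (x 2%N * y 4%N - x 4%N * y 2%N)
  | 2 => (-2) * (x 1%N * y 7%N - x 7%N * y 1%N) + (1) * (x 2%N * y 5%N - x 5%N * y 2%N) + (1) * (x 2%N * y 6%N - x 6%N * y 2%N) + (-1) * (x 3%N * y 4%N - x 4%N * y 3%N)
  | 3 => (2) * (x 2%N * y 7%N - x 7%N * y 2%N) + (2) * (x 3%N * y 6%N - x 6%N * y 3%N)
  | 4 => (-2) * (x 1%N * y 9%N - x 9%N * y 1%N) + (1) * (x 2%N * y 8%N - x 8%N * y 2%N) + (1) * (x 4%N * y 5%N - x 5%N * y 4%N) + (-1) * (x 4%N * y 6%N - x 6%N * y 4%N)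
  | 5 => (4) * (x 1%N * y 10%N - x 10%N * y 1%N) + (-1) * (x 2%N * y 9%N - x 9%N * y 2%N) + (1) * (x 4%N * y 7%N - x 7%N * y 4%N)
  | 6 => (-1) * (x 2%N * y 9%N - x 9%N * y 2%N) + (-1) * (x 3%N * y 8%N - x 8%N * y 3%N) + (-1) * (x 4%N * y 7%N - x 7%N * y 4%N)
  | 7 => (-2) * (x 2%N * y 10%N - x 10%N * y 2%N) + (-1) * (x 3%N * y 9%N - x 9%N * y 3%N) + (1) * (x 5%N * y 7%N - x 7%N * y 5%N) + (-1) * (x 6%N * y 7%N - x 7%N * y 6%N)
  | 8 => (-2) * (x 4%N * y 9%N - x 9%N * y 4%N) + (2) * (x 6%N * y 8%N - x 8%N * y 6%N)
  | 9 => (-2) * (x 4%N * y 10%N - x 10%N * y 4%N) + (1) * (x 5%N * y 9%N - x 9%N * y 5%N) + (1) * (x 6%N * y 9%N - x 9%N * y 6%N) + (1) * (x 7%N * y 8%N - x 8%N * y 7%N)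
  | 10 => (2) * (x 5%N * y 10%N - x 10%N * y 5%N) + (1) * (x 7%N * y 9%N - x 9%N * y 7%N)
  | _ => 0 end.


Lemma lbr_E (R : realType) (x y : nat -> R) : lbr (Emat x) (Emat y) = Emat (brk x y).
Proof.
apply/matrixP => i j; rewrite !mxE !big_ord_recr !big_ord0 /= !mxE.
case: i => [[|[|[|[|//]]]] ?]; case: j => [[|[|[|[|//]]]] ?]; rewrite /= /brk. all: ring. Qed.


Definition xd {R : realType} (c8 c9 c10 : R) (J : nat) : R :=
  match J with 1 => c8 | 5 => c9 | 10 => c10 | _ => 0 end.

Lemma xd_E (R : realType) (c8 c9 c10 : R) :
  c8 *: ebas R 8 + c9 *: ebas R 9 + c10 *: ebas R 10 = Emat (xd c8 c9 c10).
Proof.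
apply/matrixP => i j; rewrite !mxE.
case: i => [[|[|[|[|//]]]] ?]; case: j => [[|[|[|[|//]]]] ?]; rewrite /=; ring.
Qed.

Definition Gs {R : realType} (G : nat -> nat -> R) (i j : nat) : R :=
  if (i <= j)%N then G i j else G j i.

Lemma gform_E (R : realType) (G : nat -> nat -> R)
  (Gsym : forall mu nu : nat, (1 <= mu <= 7)%N -> (1 <= nu <= 7)%N -> G mu nu = G nu mu)
  (a b : nat -> R) :
  gform G (Emat a) (Emat b) =
  \sum_(1 <= mu < 8) \sum_(1 <= nu < 8)
     Gs G mu nu * ((a (perm10 mu) * b (perm10 nu) + a (perm10 nu) * b (perm10 mu)) / 2).
Proof.
apply: eq_big_nat => mu /andP[m1 m2]; apply: eq_big_nat => nu /andP[n1 n2].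
have hp : forall k, (1 <= k < 8)%N -> (1 <= perm10 k <= 10)%N.
  by case=> [//|[|[|[|[|[|[|[|//]]]]]]]].
rewrite /odot /ecov !acoord_E ?hp ?m1 ?n1 //.
rewrite /Gs; case: leqP => // _; rewrite Gsym //; apply/andP; split => //; by rewrite -ltnS.
Qed.

Lemma gform_P (R : realType) (G : nat -> nat -> R)
  (Gsym : forall mu nu : nat, (1 <= mu <= 7)%N -> (1 <= nu <= 7)%N -> G mu nu = G nu mu)
  (a b : nat -> R) :
  gform G (Emat a) (Emat b) =
  G 1%N 1%N * (a 2%N * b 2%N)
  + G 1%N 2%N * (a 2%N * b 3%N + a 3%N * b 2%N)
  + G 1%N 3%N * (a 2%N * b 4%N + a 4%N * b 2%N)
  + G 1%N 4%N * (a 2%N * b 6%N + a 6%N * b 2%N)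
  + G 1%N 5%N * (a 2%N * b 7%N + a 7%N * b 2%N)
  + G 1%N 6%N * (a 2%N * b 8%N + a 8%N * b 2%N)
  + G 1%N 7%N * (a 2%N * b 9%N + a 9%N * b 2%N)
  + G 2%N 2%N * (a 3%N * b 3%N)
  + G 2%N 3%N * (a 3%N * b 4%N + a 4%N * b 3%N)
  + G 2%N 4%N * (a 3%N * b 6%N + a 6%N * b 3%N)
  + G 2%N 5%N * (a 3%N * b 7%N + a 7%N * b 3%N)
  + G 2%N 6%N * (a 3%N * b 8%N + a 8%N * b 3%N)
  + G 2%N 7%N * (a 3%N * b 9%N + a 9%N * b 3%N)
  + G 3%N 3%N * (a 4%N * b 4%N)
  + G 3%N 4%N * (a 4%N * b 6%N + a 6%N * b 4%N)
  + G 3%N 5%N * (a 4%N * b 7%N + a 7%N * b 4%N)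
  + G 3%N 6%N * (a 4%N * b 8%N + a 8%N * b 4%N)
  + G 3%N 7%N * (a 4%N * b 9%N + a 9%N * b 4%N)
  + G 4%N 4%N * (a 6%N * b 6%N)
  + G 4%N 5%N * (a 6%N * b 7%N + a 7%N * b 6%N)
  + G 4%N 6%N * (a 6%N * b 8%N + a 8%N * b 6%N)
  + G 4%N 7%N * (a 6%N * b 9%N + a 9%N * b 6%N)
  + G 5%N 5%N * (a 7%N * b 7%N)
  + G 5%N 6%N * (a 7%N * b 8%N + a 8%N * b 7%N)
  + G 5%N 7%N * (a 7%N * b 9%N + a 9%N * b 7%N)
  + G 6%N 6%N * (a 8%N * b 8%N)
  + G 6%N 7%N * (a 8%N * b 9%N + a 9%N * b 8%N)
  + G 7%N 7%N * (a 9%N * b 9%N).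
Proof.
rewrite gform_E // /index_iota /= !big_cons !big_nil /Gs /=.
field. all: done.
Qed.

Definition ind {R : realType} (I : nat) (J : nat) : R := if (J == I)%N then 1 else 0.

Theorem proposition3p1 (R : realType) (G : nat -> nat -> R)
  (Gsym : forall mu nu : nat, (1 <= mu <= 7)%N -> (1 <= nu <= 7)%N -> G mu nu = G nu mu) :
  (forall X : 'M[R]_4, in_Dl X ->
     forall Y Z : 'M[R]_4, in_sp2 Y -> in_sp2 Z -> lieD X (gform G) Y Z = 0)
  <->
  (exists g22 g24 g44 g35 g26 g46 g66 : R,
     forall Y Z : 'M[R]_4, in_sp2 Y -> in_sp2 Z ->
       gform G Y Z =
         g22 * odot 2 2 Y Z + 2 * g24 * odot 2 4 Y Z + g44 * odot 4 4 Y Z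
         + 2 * g35 * (odot 3 5 Y Z - odot 1 7 Y Z)
         + 2 * g26 * odot 2 6 Y Z + 2 * g46 * odot 4 6 Y Z + g66 * odot 6 6 Y Z).
Proof.
split.
- move=> H.
  have HH : forall c8 c9 c10 a b, - gform G (Emat (brk (xd c8 c9 c10) a)) (Emat b)
                 - gform G (Emat a) (Emat (brk (xd c8 c9 c10) b)) = 0.
    move=> c8 c9 c10 a b.
    have hX : in_Dl (Emat (xd c8 c9 c10)) by exists c8, c9, c10; rewrite xd_E.
    have := H _ hX (Emat a) (Emat b) (ex_intro _ a erefl) (ex_intro _ b erefl).
    by rewrite /lieD !lbr_E.
  have f11 : G 1%N 1%N = 0.
    move: (HH 1 0 0 (ind 2) (ind 7)); rewrite !gform_P // /ind /= => h; lra.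
  have f13 : G 1%N 3%N = 0.
    move: (HH 1 0 0 (ind 2) (ind 9)); rewrite !gform_P // /ind /= => h; lra.
  have f12 : G 1%N 2%N = 0.
    move: (HH 1 0 0 (ind 3) (ind 7)); rewrite !gform_P // /ind /= => h; lra.
  have f23 : G 2%N 3%N = 0.
    move: (HH 1 0 0 (ind 3) (ind 9)); rewrite !gform_P // /ind /= => h; lra.
  have f33 : G 3%N 3%N = 0.
    move: (HH 1 0 0 (ind 4) (ind 9)); rewrite !gform_P // /ind /= => h; lra.
  have f14 : G 1%N 4%N = 0.
    move: (HH 1 0 0 (ind 6) (ind 7)); rewrite !gform_P // /ind /= => h; lra.
  have f34 : G 3%N 4%N = 0.
    move: (HH 1 0 0 (ind 6) (ind 9)); rewrite !gform_P // /ind /= => h; lra.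
  have f15 : G 1%N 5%N = 0.
    move: (HH 1 0 0 (ind 7) (ind 7)); rewrite !gform_P // /ind /= => h; lra.
  have f16 : G 1%N 6%N = 0.
    move: (HH 1 0 0 (ind 7) (ind 8)); rewrite !gform_P // /ind /= => h; lra.
  have f36 : G 3%N 6%N = 0.
    move: (HH 1 0 0 (ind 8) (ind 9)); rewrite !gform_P // /ind /= => h; lra.
  have f37 : G 3%N 7%N = 0.
    move: (HH 1 0 0 (ind 9) (ind 9)); rewrite !gform_P // /ind /= => h; lra.
  have f25 : G 2%N 5%N = 0.
    move: (HH 0 1 0 (ind 3) (ind 7)); rewrite !gform_P // /ind /= => h; lra.
  have f27 : G 2%N 7%N = 0.
    move: (HH 0 1 0 (ind 3) (ind 9)); rewrite !gform_P // /ind /= => h; lra.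
  have f45 : G 4%N 5%N = 0.
    move: (HH 0 1 0 (ind 6) (ind 7)); rewrite !gform_P // /ind /= => h; lra.
  have f47 : G 4%N 7%N = 0.
    move: (HH 0 1 0 (ind 6) (ind 9)); rewrite !gform_P // /ind /= => h; lra.
  have f55 : G 5%N 5%N = 0.
    move: (HH 0 1 0 (ind 7) (ind 7)); rewrite !gform_P // /ind /= => h; lra.
  have f56 : G 5%N 6%N = 0.
    move: (HH 0 1 0 (ind 7) (ind 8)); rewrite !gform_P // /ind /= => h; lra.
  have f57 : G 5%N 7%N = 0.
    move: (HH 0 1 0 (ind 7) (ind 9)); rewrite !gform_P // /ind /= => h; lra.
  have f67 : G 6%N 7%N = 0.
    move: (HH 0 1 0 (ind 8) (ind 9)); rewrite !gform_P // /ind /= => h; lra.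
  have f77 : G 7%N 7%N = 0.
    move: (HH 0 1 0 (ind 9) (ind 9)); rewrite !gform_P // /ind /= => h; lra.
  have f17 : G 1%N 7%N = - G 3%N 5%N.
    move: (HH 1 0 0 (ind 7) (ind 9)); rewrite !gform_P // /ind /= => h; lra.
  exists (G 2%N 2%N), (G 2%N 4%N), (G 4%N 4%N), (G 3%N 5%N), (G 2%N 6%N), (G 4%N 6%N), (G 6%N 6%N).
  move=> Y Z [a ->] [b ->].
  rewrite /odot /ecov !acoord_E //=.
  rewrite gform_P //.
  rewrite f11 f13 f12 f23 f33 f14 f34 f15 f16 f36 f37 f25 f27 f45 f47 f55 f56 f57 f67 f77 f17.
  by field.
- move=> [g22 [g24 [g44 [g35 [g26 [g46 [g66 Hg]]]]]]] X [c8 [c9 [c10 ->]]] Y Z [a ->] [b ->].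
  rewrite xd_E /lieD !lbr_E !Hg; try by eexists.
  rewrite /odot /ecov !acoord_E // /=.
  by field.
Qed.
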